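(* For every integer $m\ge0$ and all $x,u\in O$: (1) $D_{q^m-1}(x+u)=\sum_{e+f=q^m-1}(-1)^eD_e(x)D_f(u)$; (2) $D_{q^m-1}(x-u)=\sum_{e+f=q^m-1}D_e(x)D_f(u)$; (3) $D'_{q^m-1}(x+u)=\sum_{e+f=q^m-1}(-1)^eD_e(x)D'_f(u)$; (4) $D'_{q^m-1}(x-u)=\sum_{e+f=q^m-1}D_e(x)D'_f(u)$, where the sums run over pairs of nonnegative integers $(e,f)$.
   Context: Let $q$ be a prime power, $O=\mathbf{F}_q[[T]]$. Hasse derivatives: $\mathcal{D}_n(\sum_ia_iT^i)=\sum_i\binom{i}{n}a_iT^{i-n}$ (binomials in $\mathbf{F}_q$). For $j\ge0$ with base-$q$ expansion $j=\alpha_0+\alpha_1q+\cdots+\alpha_sq^s$ ($0\le\alpha_i<q$): $D_j(x)=\prod_{n=0}^s\mathcal{D}_n(x)^{\alpha_n}$ ($D_0=1$), and $D'_j(x)=\prod_{n=0}^sD'_{\alpha_nq^n}(x)$ where $D'_{\alpha q^n}(x)=\mathcal{D}_n(x)^\alpha$ if $0\le\alpha<q-1$ and $D'_{(q-1)q^n}(x)=\mathcal{D}_n(x)^{q-1}-1$. *)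

(* Defs.v *)
(* O = F_q[[T]] is modelled as coefficient sequences nat -> F
   where F is a finite field and q := #|F|. *)
From HB Require Import structures.
From mathcomp Require Import all_boot all_order all_algebra.
Set Implicit Arguments. Unset Strict Implicit. Unset Printing Implicit Defensive.
Import GRing.Theory.
Local Open Scope ring_scope.

Section PowerSeries.
Variable F : finFieldType.

Definition pseries := nat -> F.

Definition ps_const (c : F) : pseries := fun i => if i == 0%N then c else 0.
Definition ps_one : pseries := ps_const 1.
Definition ps_add (a b : pseries) : pseries := fun i => a i + b i.
Definition ps_opp (a : pseries) : pseries := fun i => - a i.
Definition ps_sub (a b : pseries) : pseries := fun i => a i - b i.
Definition ps_scale (c : F) (a : pseries) : pseries := fun i => c * a i.
Definition ps_mul (a b : pseries) : pseries :=
  fun k => \sum_(i < k.+1) a i * b (k - i)%N.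
Fixpoint ps_exp (a : pseries) (n : nat) : pseries :=
  match n with 0%N => ps_one | n'.+1 => ps_mul a (ps_exp a n') end.
Definition ps_sum (s : seq pseries) : pseries := foldr ps_add (fun _ => 0) s.
Definition ps_prod (s : seq pseries) : pseries := foldr ps_mul ps_one s.

Definition q : nat := #|F|.

(* Hasse derivative: D_n (sum_i a_i T^i) = sum_i binom(i,n) a_i T^(i-n);
   coefficient of T^k is binom(k+n,n) a_(k+n) (binomial taken in F). *)
Definition hasse (n : nat) (x : pseries) : pseries :=
  fun k => ('C(k + n, n))%:R * x (k + n)%N.

Definition digit (j n : nat) : nat := ((j %/ q ^ n) %% q)%N.

(* D_j(x) = prod_n (hasse n x)^(alpha_n); digits of index >= j are 0, so
   taking n < j.+1 covers the whole base-q expansion (D_0 = 1). *)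
Definition Dj (j : nat) (x : pseries) : pseries :=
  ps_prod [seq ps_exp (hasse n x) (digit j n) | n <- iota 0 j.+1].

Definition Dprime_digit (alpha n : nat) (x : pseries) : pseries :=
  if alpha == q.-1 then ps_sub (ps_exp (hasse n x) q.-1) ps_one
  else ps_exp (hasse n x) alpha.

Definition Dpj (j : nat) (x : pseries) : pseries :=
  ps_prod [seq Dprime_digit (digit j n) n x | n <- iota 0 j.+1].

End PowerSeries.

(* Main.v *)
Require Import Defs.
From mathcomp Require Import all_boot all_order all_algebra.
From mathcomp Require fingroup pgroup abelian finfield.
From mathcomp Require Import zify ring.
From Stdlib Require Import FunctionalExtensionality.
Set Implicit Arguments. Unset Strict Implicit. Unset Printing Implicit Defensive.
Import GRing.Theory.
Local Open Scope ring_scope.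

Section Generic.
Variable R : comNzRingType.
Variable q : nat.
Hypothesis q_gt1 : (1 < q)%N.

Definition dig (j n : nat) : nat := ((j %/ q ^ n) %% q)%N.
Definition PP (G : nat -> R -> R) (m : nat) (A : nat -> R) (j : nat) :=
  \prod_(i < m) G (dig j i) (A i).
Definition pw (a : nat) (x : R) := x ^+ a.
Definition dG (G : nat -> R -> R) (j : nat) (A : nat -> R) :=
  \prod_(n <- iota 0 j.+1) G (dig j n) (A n).

Lemma q_gt0 : (0 < q)%N. Proof. by apply: ltn_trans q_gt1. Qed.

Lemma PP_S G m A j :
  PP G m.+1 A j = G (j %% q)%N (A 0%N) * PP G m (fun i => A i.+1) (j %/ q)%N.
Proof.
rewrite /PP big_ord_recl /dig expn0 divn1; congr (_ * _).
by apply: eq_bigr => i _; rewrite lift0 expnS divnMA.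
Qed.

Lemma natid (Q e d : nat) : (e < Q)%N -> (d < q)%N ->
  ((Q * q).-1 - (e * q + d) = (Q.-1 - e) * q + (q.-1 - d))%N.
Proof.
move=> eQ dq.
have [r ->] : exists r, Q = (e + r.+1)%N by exists (Q - e.+1)%N; lia.
have [t ->] : exists t, q = (d + t.+1)%N by exists (q - d.+1)%N; lia.
nia.
Qed.

Lemma sum_split (f : nat -> R) a :
  \sum_(e < a * q) f e = \sum_(e' < a) \sum_(d < q) f (e' * q + d)%N.
Proof.
elim: a => [|a IH]; first by rewrite mul0n !big_ord0.
rewrite big_ord_recr /= -IH mulSnr big_split_ord /=.
by congr (_ + _).
Qed.

Variables (s : R) (G : nat -> R -> R) (Hf : R -> R -> R).
Hypothesis sq : s ^+ q = s.
Hypothesis Hexp : forall a b,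
  Hf a b = \sum_(d < q) s ^+ d * a ^+ d * G (q.-1 - d)%N b.

Lemma main m : forall A B : nat -> R,
  \prod_(n < m) Hf (A n) (B n) =
  \sum_(e < q ^ m) s ^+ e * (PP pw m A e * PP G m B ((q ^ m).-1 - e)%N).
Proof.
elim: m => [|m IH] A B.
  by rewrite big_ord0 expn0 big_ord1 /PP !big_ord0 !mulr1.
rewrite big_ord_recl Hexp.
rewrite [X in _ * X](eq_bigr (fun i : 'I_m => Hf (A i.+1) (B i.+1))); last by move=> i _; rewrite lift0.
rewrite (IH (fun i => A i.+1) (fun i => B i.+1)) expnSr.
rewrite (sum_split (fun e => s ^+ e * (PP pw m.+1 A e * PP G m.+1 B ((q ^ m * q).-1 - e)%N))).
rewrite mulr_suml; under eq_bigr do rewrite mulr_sumr.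
rewrite exchange_big /=; apply: eq_bigr => e' _; apply: eq_bigr => d _.
rewrite natid // !PP_S /pw.
rewrite !modnMDl !modn_small ?(ltn_ord d) //; last first.
  by rewrite -subn1 -subnDA ltn_subrL q_gt0 andbT; case: (d:nat)=> //=; lia.
rewrite !divnMDl ?q_gt0 // !divn_small ?(ltn_ord d) //; last first.
  rewrite -subn1; have := q_gt0; lia.
rewrite !addn0 exprD mulnC exprM sq.
ring.
Qed.

Lemma prod_trunc (f : nat -> R) a b : (a <= b)%N ->
  (forall n, (a <= n)%N -> f n = 1) ->
  \prod_(n < b) f n = \prod_(n < a) f n.
Proof.
move=> ab hf; rewrite -!(big_mkord xpredT) (big_cat_nat (leq0n a) ab) /=.
rewrite [X in _ * X](_ : _ = 1) ?mulr1 //.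
by rewrite big_nat_cond big1 // => n /andP[/andP[an _] _]; exact: hf.
Qed.

Lemma dig_small j n : (j < q ^ n)%N -> dig j n = 0%N.
Proof. by move=> h; rewrite /dig (divn_small h) mod0n. Qed.

Lemma dG_PP (H : nat -> R -> R) j L A : (forall a, H 0%N a = 1) -> (j < q ^ L)%N ->
  dG H j A = PP H L A j.
Proof.
move=> H0 jL; rewrite /dG /PP.
have -> : iota 0 j.+1 = index_iota 0 j.+1 by rewrite /index_iota subn0.
rewrite big_mkord.
have h1 : forall n, (j.+1 <= n)%N -> H (dig j n) (A n) = 1.
  move=> n hn; rewrite dig_small ?H0 //.
  by apply: leq_trans (ltn_expl n q_gt1); apply: leq_trans hn.
have h2 : forall n, (L <= n)%N -> H (dig j n) (A n) = 1.
  move=> n hn; rewrite dig_small ?H0 //.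
  by apply: leq_trans jL _; rewrite leq_pexp2l // q_gt0.
case: (leqP j.+1 L) => hL.
  by rewrite (prod_trunc hL h1).
by rewrite (prod_trunc (ltnW hL) h2).
Qed.

Lemma PP_N H m A : PP H m A (q ^ m).-1 = \prod_(n < m) H q.-1 (A n).
Proof.
elim: m A => [|m IH] A; first by rewrite /PP !big_ord0.
rewrite PP_S big_ord_recl.
have qm : (0 < q ^ m)%N by rewrite expn_gt0 q_gt0.
have := natid qm (ltn_trans (ltnSn 0) q_gt1).
rewrite ?mul0n ?muln0 ?addn0 ?subn0 -expnSr => ->.
rewrite modnMDl modn_small; last by rewrite prednK ?ltnSn // q_gt0.
rewrite divnMDl ?q_gt0 // divn_small ?addn0; last by rewrite prednK ?ltnSn // q_gt0.
rewrite IH; congr (_ * _); apply: eq_bigr => i _; by rewrite lift0.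
Qed.

Theorem gen_identity m (A B C : nat -> R) :
  G 0%N =1 (fun _ => 1) ->
  (forall n, G q.-1 (C n) = Hf (A n) (B n)) ->
  let N := (q ^ m).-1 in
  dG G N C = \sum_(e <- iota 0 N.+1) s ^+ e * (dG pw e A * dG G (N - e) B).
Proof.
move=> G0 hC N.
have qm : (0 < q ^ m)%N by rewrite expn_gt0 q_gt0.
have NS : N.+1 = (q ^ m)%N by rewrite /N prednK.
rewrite (@dG_PP G N m C G0); last by rewrite -NS.
rewrite PP_N.
have -> : iota 0 N.+1 = index_iota 0 N.+1 by rewrite /index_iota subn0.
rewrite big_mkord.
rewrite (eq_bigr (fun n : 'I_m => Hf (A n) (B n))); last by move=> i _; rewrite hC.
rewrite main NS; apply: eq_bigr => e _.
have pw0 : forall a, pw 0 a = 1 by move=> a; rewrite /pw expr0.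
have eN : (e < q ^ m)%N by [].
rewrite (@dG_PP pw e m A pw0 eN) (@dG_PP G (N - e)%N m B G0) //.
by apply: leq_ltn_trans (leq_subr _ _) _; rewrite -NS.
Qed.
End Generic.

Section Expand.
Variable R : comNzRingType.
Variable q : nat.
Hypothesis q_gt1 : (1 < q)%N.
Hypothesis hb : forall d, (d < q)%N -> ('C(q.-1, d))%:R = (-1) ^+ d :> R.

Definition gP (a : nat) (x : R) := if a == q.-1 then x ^+ q.-1 - 1 else x ^+ a.

Lemma qS : exists n, q = n.+1.
Proof. by exists q.-1; rewrite prednK // (ltn_trans _ q_gt1). Qed.

Lemma sign_q : (-1) ^+ q = -1 :> R.
Proof.
have [n qn] := qS; have := hb (d := n); rewrite qn /= binn ltnSn => /(_ isT) h.
by rewrite exprS -h mulr1.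
Qed.

Lemma sign_q1 : (-1) ^+ q.-1 = 1 :> R.
Proof.
have [n qn] := qS; have := hb (d := n); rewrite qn /= binn ltnSn => /(_ isT) h.
by rewrite -h.
Qed.

Lemma E1 (a b : R) : (a + b) ^+ q.-1 = \sum_(d < q) (-1) ^+ d * a ^+ d * pw (q.-1 - d) b.
Proof.
have [n qn] := qS.
have hb' : forall d, (d < n.+1)%N -> ('C(n, d))%:R = (-1) ^+ d :> R.
  by move=> d; rewrite -qn => /hb; rewrite qn.
rewrite qn /= addrC exprDn; apply: eq_bigr => i _.
by rewrite -mulr_natl hb' // /pw; ring.
Qed.

Lemma E2 (a b : R) : (a - b) ^+ q.-1 = \sum_(d < q) 1 ^+ d * a ^+ d * pw (q.-1 - d) b.
Proof.
rewrite E1; apply: eq_bigr => i _; rewrite /pw (exprNn b).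
have h : (-1) ^+ i * (-1) ^+ (q.-1 - i) = 1 :> R.
  rewrite -exprD subnKC ?sign_q1 //.
  by have := ltn_ord i; lia.
rewrite expr1n mul1r; transitivity ((-1) ^+ i * (-1) ^+ (q.-1 - i) * a ^+ i * b ^+ (q.-1 - i)); first ring.
by rewrite h mul1r.
Qed.

Lemma E34 (s a b : R) (F : R -> R -> R) :
  F a b = \sum_(d < q) s ^+ d * a ^+ d * pw (q.-1 - d) b ->
  F a b - 1 = \sum_(d < q) s ^+ d * a ^+ d * gP (q.-1 - d) b.
Proof.
move=> ->; have [n qn] := qS.
move: (ltn_trans (ltnSn 0) q_gt1); rewrite /gP qn /= => n0.
rewrite !big_ord_recl /= subn0 eqxx /pw.
have -> : \sum_(i < n) s ^+ (bump 0 i) * a ^+ (bump 0 i) *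
    (if (n - bump 0 i)%N == n then b ^+ n - 1 else b ^+ (n - bump 0 i))
  = \sum_(i < n) s ^+ (bump 0 i) * a ^+ (bump 0 i) * b ^+ (n - bump 0 i).
  apply: eq_bigr => i _; case: eqP => // h; exfalso; move: h.
  have := ltn_ord i; rewrite /bump /=; lia.
ring.
Qed.
End Expand.

Section Cong.
Variable F : finFieldType.
Local Notation ps := (pseries F).
Variable k : nat.

Definition cg (a : ps) (P : {poly F}) := forall j, (j <= k)%N -> a j = P`_j.

Lemma cg_add a b P Q : cg a P -> cg b Q -> cg (ps_add a b) (P + Q).
Proof. by move=> ha hb j hj; rewrite /ps_add coefD ha ?hb. Qed.

Lemma cg_sub a b P Q : cg a P -> cg b Q -> cg (ps_sub a b) (P - Q).
Proof. by move=> ha hb j hj; rewrite /ps_sub coefB ha ?hb. Qed.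

Lemma cg_scale c a P : cg a P -> cg (ps_scale c a) (c%:P * P).
Proof. by move=> ha j hj; rewrite /ps_scale coefCM ha. Qed.

Lemma cg_one : cg (ps_one F) 1.
Proof. by move=> j hj; rewrite /ps_one /ps_const coef1; case: (j == 0%N). Qed.

Lemma cg_mul a b P Q : cg a P -> cg b Q -> cg (ps_mul a b) (P * Q).
Proof.
move=> ha hb j hj; rewrite /ps_mul coefM; apply: eq_bigr => i _.
rewrite ha ?hb //; first by apply: leq_trans (leq_subr _ _) hj.
by apply: leq_trans hj; rewrite -ltnS.
Qed.

Lemma cg_exp a P n : cg a P -> cg (ps_exp a n) (P ^+ n).
Proof.
move=> ha; elim: n => [|n IH]; first by rewrite expr0; exact: cg_one.
by rewrite exprS; apply: cg_mul.
Qed.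

Lemma cg_prod (f : nat -> ps) (g : nat -> {poly F}) s :
  (forall n, cg (f n) (g n)) -> cg (ps_prod [seq f n | n <- s]) (\prod_(n <- s) g n).
Proof.
move=> h; elim: s => [|n s IH]; first by rewrite big_nil; exact: cg_one.
by rewrite big_cons; apply: cg_mul.
Qed.

Lemma cg_sum (f : nat -> ps) (g : nat -> {poly F}) s :
  (forall n, cg (f n) (g n)) -> cg (ps_sum [seq f n | n <- s]) (\sum_(n <- s) g n).
Proof.
move=> h; elim: s => [|n s IH]; first by rewrite big_nil => j _; rewrite coef0.
by rewrite big_cons; apply: cg_add.
Qed.

Definition T (a : ps) : {poly F} := \poly_(j < k.+1) a j.

Lemma cg_T a : cg a (T a).
Proof. by move=> j hj; rewrite coef_poly ltnS hj. Qed.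

Lemma cg_eq a b P : cg a P -> cg b P -> a k = b k.
Proof. by move=> ha hb; rewrite ha ?hb. Qed.

Lemma cg_Dj j y (H : nat -> {poly F}) : (forall n, cg (hasse n y) (H n)) ->
  cg (Dj j y) (dG (q F) (@pw _) j H).
Proof. by move=> h; apply: cg_prod => n; apply: cg_exp. Qed.

Lemma cg_Dpj j y (H : nat -> {poly F}) : (forall n, cg (hasse n y) (H n)) ->
  cg (Dpj j y) (dG (q F) (gP (q F)) j H).
Proof.
move=> h; apply: cg_prod => n; rewrite /Dprime_digit /gP; case: ifP => _.
  by apply: cg_sub; [apply: cg_exp | apply: cg_one].
exact: cg_exp.
Qed.

End Cong.

Lemma hasse_add (F : finFieldType) n (x u : pseries F) :
  hasse n (ps_add x u) = ps_add (hasse n x) (hasse n u).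
Proof. by apply: functional_extensionality => j; rewrite /hasse /ps_add mulrDr. Qed.

Lemma hasse_sub (F : finFieldType) n (x u : pseries F) :
  hasse n (ps_sub x u) = ps_sub (hasse n x) (hasse n u).
Proof. by apply: functional_extensionality => j; rewrite /hasse /ps_sub mulrBr. Qed.

Lemma binq0 (F : finFieldType) d : (0 < d)%N -> (d < #|F|)%N -> ('C(#|F|, d))%:R = 0 :> F.
Proof.
move=> d0 dq.
have [p pr pF] := finfield.finPcharP F.
have pn : [pchar {poly F}].-nat #|F|.
  rewrite (eq_pnat _ (@pchar_poly F)) (eq_pnat _ (pcharf_eq pF)).
  by have := abelian.abelem_pgroup (abelian.fin_ring_pchar_abelem pF); rewrite /pgroup.pgroup cardsT.
have E := congr1 (fun P : {poly F} => P`_d) (exprDn_pchar 1 'X pn).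
move: E => /=; rewrite exprDn coef_sum coefD expr1n coef1 coefXn.
have dq1 : (d < #|F|.+1)%N by apply: ltnW.
rewrite (bigD1 (Ordinal dq1)) //= big1 ?addr0; last first.
  move=> i /negbTE ne; rewrite coefMn expr1n mul1r coefXn.
  by rewrite eq_sym [_ == _]ne mul0rn.
rewrite coefMn expr1n mul1r coefXn eqxx.
by rewrite (negbTE (lt0n_neq0 d0)) (ltn_eqF dq) addr0 => ->.
Qed.

Lemma binF (F : finFieldType) d : (d < q F)%N -> ('C((q F).-1, d))%:R = (-1) ^+ d :> F.
Proof.
have q1 := finfield.finNzRing_gt1 F; rewrite /q.
have [n qn] : exists n, #|F| = n.+1 by exists #|F|.-1; rewrite prednK // ltnW.
rewrite qn /=.
elim: d => [|d IH] hd; first by rewrite bin0 expr0.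
have hd' : (d.+1 < #|F|)%N by rewrite qn.
have := binq0 (ltn0Sn d) hd'.
rewrite qn binS natrD IH ?(ltn_trans (ltnSn d)) // => /eqP.
by rewrite addr_eq0 => /eqP ->; rewrite exprS mulN1r.
Qed.

Lemma hbpoly (F : finFieldType) d : (d < q F)%N ->
  ('C((q F).-1, d))%:R = (-1) ^+ d :> {poly F}.
Proof.
by move=> hd; rewrite -(rmorph_nat (@polyC F)) binF // rmorphXn rmorphN1.
Qed.

Lemma cg_sign (F : finFieldType) k e (a : pseries F) P :
  cg k a P -> cg k (ps_scale ((-1) ^+ e) a) ((-1) ^+ e * P).
Proof. by move=> h; have := cg_scale ((-1) ^+ e) h; rewrite rmorphXn rmorphN1. Qed.

Theorem corollary8 (F : finFieldType) (m : nat) (x u : pseries F) :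
  let N := ((q F) ^ m).-1 in
  [/\ Dj N (ps_add x u) =
        ps_sum [seq ps_scale ((-1) ^+ e) (ps_mul (Dj e x) (Dj (N - e) u))
               | e <- iota 0 N.+1],
      Dj N (ps_sub x u) =
        ps_sum [seq ps_mul (Dj e x) (Dj (N - e) u) | e <- iota 0 N.+1],
      Dpj N (ps_add x u) =
        ps_sum [seq ps_scale ((-1) ^+ e) (ps_mul (Dj e x) (Dpj (N - e) u))
               | e <- iota 0 N.+1]
    & Dpj N (ps_sub x u) =
        ps_sum [seq ps_mul (Dj e x) (Dpj (N - e) u) | e <- iota 0 N.+1]].
Proof.
move=> N; rewrite {}/N.
have q1 : (1 < q F)%N := finfield.finNzRing_gt1 F.
have hb : forall d, (d < q F)%N -> ('C((q F).-1, d))%:R = (-1) ^+ d :> {poly F}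
  := @hbpoly F.
have G0 : (@pw {poly F}) 0%N =1 (fun _ => 1) by move=> a; rewrite /pw expr0.
have G0' : (gP (R:={poly F}) (q F)) 0%N =1 (fun _ => 1).
  move=> a; rewrite /gP; case: eqP => [h|_]; last by rewrite expr0.
  by exfalso; move: q1 h; lia.
have s1 : (1 : {poly F}) ^+ q F = 1 by rewrite expr1n.
split; apply: functional_extensionality => k.
- pose A := fun n => T k (hasse n x); pose B := fun n => T k (hasse n u).
  have hC : forall n, pw (q F).-1 (A n + B n) =
    (fun a b => (a + b) ^+ (q F).-1) (A n) (B n) by [].
  have GI := gen_identity q1 (sign_q q1 hb) (fun a b => E1 q1 hb a b) m G0 hC.

  apply: (@cg_eq _ k _ _ (dG (q F) (@pw _) ((q F) ^ m).-1 (fun n => A n + B n))).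
    by apply: cg_Dj => n; rewrite hasse_add; apply: cg_add; apply: cg_T.
  rewrite GI; apply: cg_sum => e; apply: cg_sign; apply: cg_mul;
    by apply: cg_Dj => n; apply: cg_T.
- pose A := fun n => T k (hasse n x); pose B := fun n => T k (hasse n u).
  have hC : forall n, pw (q F).-1 (A n - B n) =
    (fun a b => (a - b) ^+ (q F).-1) (A n) (B n) by [].
  have GI := gen_identity q1 s1 (fun a b => E2 q1 hb a b) m G0 hC.

  apply: (@cg_eq _ k _ _ (dG (q F) (@pw _) ((q F) ^ m).-1 (fun n => A n - B n))).
    by apply: cg_Dj => n; rewrite hasse_sub; apply: cg_sub; apply: cg_T.
  rewrite GI; under eq_bigr do rewrite expr1n mul1r.
  apply: cg_sum => e; apply: cg_mul;
    by [apply: cg_Dj => n; apply: cg_T | apply: cg_Dpj => n; apply: cg_T].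
- pose A := fun n => T k (hasse n x); pose B := fun n => T k (hasse n u).
  have hC : forall n, gP (q F) (q F).-1 (A n + B n) =
    (fun a b => (a + b) ^+ (q F).-1 - 1) (A n) (B n) by move=> n; rewrite /gP eqxx.
  have GI := gen_identity q1 (sign_q q1 hb)
    (fun a b => @E34 _ _ q1 (-1) a b (fun a b => (a + b) ^+ (q F).-1) (E1 q1 hb a b))
    m G0' hC.

  apply: (@cg_eq _ k _ _ (dG (q F) (gP (q F)) ((q F) ^ m).-1 (fun n => A n + B n))).
    by apply: cg_Dpj => n; rewrite hasse_add; apply: cg_add; apply: cg_T.
  rewrite GI; apply: cg_sum => e; apply: cg_sign; apply: cg_mul;
    by [apply: cg_Dj => n; apply: cg_T | apply: cg_Dpj => n; apply: cg_T].
- pose A := fun n => T k (hasse n x); pose B := fun n => T k (hasse n u).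
  have hC : forall n, gP (q F) (q F).-1 (A n - B n) =
    (fun a b => (a - b) ^+ (q F).-1 - 1) (A n) (B n) by move=> n; rewrite /gP eqxx.
  have GI := gen_identity q1 s1
    (fun a b => @E34 _ _ q1 1 a b (fun a b => (a - b) ^+ (q F).-1) (E2 q1 hb a b))
    m G0' hC.

  apply: (@cg_eq _ k _ _ (dG (q F) (gP (q F)) ((q F) ^ m).-1 (fun n => A n - B n))).
    by apply: cg_Dpj => n; rewrite hasse_sub; apply: cg_sub; apply: cg_T.
  rewrite GI; under eq_bigr do rewrite expr1n mul1r.
  apply: cg_sum => e; apply: cg_mul;
    by [apply: cg_Dj => n; apply: cg_T | apply: cg_Dpj => n; apply: cg_T].
Qed.
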